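(* Let $0<c_1\le c_2$ be constants, let $n$ be sufficiently large, let $t\in[1,n^{0.1}]$, and let $H$ be an undirected graph on $n$ vertices in which every vertex has degree between $c_1t$ and $c_2t$ and which has no cycle of length at most $8$. For all constants $a,b>0$ there is a constant $K$ (depending only on $a,b,c_1,c_2$) such that for every vertex set $C$ with $|C|\le at$, the number of distinct maximal cliques $D$ of $H^2$ with $|C\cap D|\ge bt$ is at most $K$.
   Context: $H^2$ (the square of $H$) is the graph on the vertex set of $H$ in which $u\neq v$ are adjacent if and only if there is a path of length exactly $2$ between $u$ and $v$ in $H$. A set $C$ is said to cover a maximal clique $D$ of $H^2$ if $|C\cap D|=\Omega(t)$. *)

(* Defs.v *)
From HB Require Import structures.
From mathcomp Require Import all_boot all_order all_algebra.
From mathcomp Require Import reals.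
Set Implicit Arguments. Unset Strict Implicit. Unset Printing Implicit Defensive.
Import Order.TTheory GRing.Theory Num.Theory.

Definition simple_graph (T : finType) (e : rel T) : Prop :=
  symmetric e /\ irreflexive e.

Definition deg (T : finType) (e : rel T) (v : T) : nat := #|[set w | e v w]|.

Definition no_short_cycle (T : finType) (e : rel T) (k : nat) : Prop :=
  forall s : seq T, uniq s -> 3 <= size s <= k -> ~~ cycle e s.

Definition sq_graph (T : finType) (e : rel T) : rel T :=
  fun u v => (u != v) && [exists w, e u w && e w v].

Definition is_clique (T : finType) (e : rel T) (D : {set T}) : bool :=
  [forall u in D, forall v in D, (u != v) ==> e u v].

Definition is_maximal_clique (T : finType) (e : rel T) (D : {set T}) : bool :=
  is_clique e D &&
  [forall D' : {set T}, (is_clique e D' && (D \subset D')) ==> (D' == D)].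

(* Main.v *)
Require Import Defs.
From HB Require Import structures.
From mathcomp Require Import all_boot all_order all_algebra.
From mathcomp Require Import reals.
Import Order.TTheory GRing.Theory Num.Theory.

Section G.
Variables (T : finType) (e : rel T).
Hypotheses (hsym : symmetric e) (hirr : irreflexive e) (hnc : no_short_cycle e 8).

Lemma adj_neq u v : e u v -> u != v.
Proof. by apply: contraTneq => ->; rewrite hirr. Qed.

Lemma nc3 a b c : a != b -> a != c -> b != c ->
  e a b -> e b c -> e c a -> False.
Proof.
move=> ab ac bc h1 h2 h3.
have := hnc [:: a; b; c].
rewrite /= !inE !negb_or ab ac bc h1 h2 h3 /=.
by move=> /(_ isT isT).
Qed.

Lemma nc4 a b c d : a != b -> a != c -> a != d -> b != c -> b != d -> c != d ->
  e a b -> e b c -> e c d -> e d a -> False.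
Proof.
move=> ab ac ad bc bd cd h1 h2 h3 h4.
have := hnc [:: a; b; c; d].
rewrite /= !inE !negb_or ab ac ad bc bd cd h1 h2 h3 h4 /=.
by move=> /(_ isT isT).
Qed.

Lemma nc6 a b c d f g :
  a != b -> a != c -> a != d -> a != f -> a != g ->
  b != c -> b != d -> b != f -> b != g ->
  c != d -> c != f -> c != g ->
  d != f -> d != g -> f != g ->
  e a b -> e b c -> e c d -> e d f -> e f g -> e g a -> False.
Proof.
move=> ab ac ad af ag bc bd bf bg cd cf cg df dg fg h1 h2 h3 h4 h5 h6.
have := hnc [:: a; b; c; d; f; g].
rewrite /= !inE !negb_or ab ac ad af ag bc bd bf bg cd cf cg df dg fg.
by rewrite h1 h2 h3 h4 h5 h6 => /(_ isT isT).
Qed.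

Lemma cliqueP (r : rel T) (D : {set T}) : is_clique r D -> forall u v, u \in D -> v \in D -> u != v -> r u v.
Proof.
move=> /forall_inP H u v uD vD uv.
by have /forall_inP/(_ v vD)/implyP := H u uD; apply.
Qed.

Arguments cliqueP {r D}.

Lemma maximalP (r : rel T) (D : {set T}) : is_maximal_clique r D ->
  is_clique r D /\ forall D', is_clique r D' -> D \subset D' -> D' = D.
Proof.
case/andP=> hc /forallP hm; split=> // D' h1 h2.
by apply/eqP; have /implyP := hm D'; apply; rewrite h1 h2.
Qed.

Arguments maximalP {r D}.

Lemma sqP u v : sq_graph e u v -> u != v /\ exists w, e u w /\ e w v.
Proof. by case/andP=> -> /existsP [w /andP [h1 h2]]; split=> //; exists w. Qed.

Arguments sqP {u v}.

Lemma nbr_clique w : is_clique (sq_graph e) [set z | e w z].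
Proof.
apply/forall_inP=> u; rewrite inE=> hu; apply/forall_inP=> v; rewrite inE=> hv.
apply/implyP=> uv; rewrite /sq_graph uv; apply/existsP; exists w.
by rewrite hv andbT hsym.
Qed.

Ltac solve_side := first [done | exact: adj_neq | (rewrite eq_sym; done)
  | (rewrite eq_sym; exact: adj_neq) | (rewrite hsym; done)
  | (apply: adj_neq; rewrite hsym; done)
  | (rewrite eq_sym; apply: adj_neq; rewrite hsym; done)].

Lemma clique_sub D x y w : is_clique (sq_graph e) D -> x \in D -> y \in D -> x != y ->
  e x w -> e w y -> D \subset [set z | e w z].
Proof.
move=> hD xD yD xy xw wy; apply/subsetP=> z zD; rewrite inE.
case: (eqVneq z x) => [->|zx]; first by rewrite hsym.
case: (eqVneq z y) => [->|zy]; first by [].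
have xz : x != z by rewrite eq_sym.
have yz : y != z by rewrite eq_sym.
have [_ [w1 [xw1 w1z]]] := sqP (cliqueP hD x z xD zD xz).
have [_ [w2 [yw2 w2z]]] := sqP (cliqueP hD y z yD zD yz).
case: (eqVneq w1 w) => [<-//|w1w].
case: (eqVneq w2 w) => [<-//|w2w].
case: (eqVneq w1 w2) => [E|w12].
  subst w2; exfalso.
  by apply: (@nc4 x w y w1); solve_side.
exfalso.
have xw2 : x != w2.
  apply/eqP=> E; subst w2.
  by apply: (@nc3 x w y); solve_side.
have wz : w != z.
  apply/eqP=> E; subst z.
  by apply: (@nc3 x w1 w); solve_side.
have yw1 : y != w1.
  apply/eqP=> E; subst w1.
  by apply: (@nc3 x w y); solve_side.
by apply: (@nc6 x w y w2 z w1); solve_side.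
Qed.

Lemma maxclique_nbr D x y : is_maximal_clique (sq_graph e) D -> x \in D -> y \in D -> x != y ->
  exists w, D = [set z | e w z].
Proof.
move=> /maximalP [hc hm] xD yD xy.
have [_ [w [xw wy]]] := sqP (cliqueP hc x y xD yD xy).
exists w; apply/esym/hm; first exact: nbr_clique.
exact: (@clique_sub D x y w hc xD yD xy xw wy).
Qed.

Arguments maxclique_nbr {D x y}.

Lemma maxclique_eq D x y w : is_maximal_clique (sq_graph e) D -> x \in D -> y \in D -> x != y ->
  e x w -> e w y -> D = [set z | e w z].
Proof.
move=> /maximalP [hc hm] xD yD xy xw wy.
apply/esym/hm; first exact: nbr_clique.
exact: (@clique_sub D x y w hc xD yD xy xw wy).
Qed.

Arguments maxclique_eq {D x y w}.

Lemma countA (F : {set {set T}}) (C : {set T}) :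
  (forall D, D \in F -> is_maximal_clique (sq_graph e) D /\ exists x, x \in C :&: D) ->
  #|F| <= \sum_(x in C) deg e x + #|C|.
Proof.
move=> hF.
set U := \bigcup_(x in C) [set w | e x w].
have sub : F \subset ((fun w => [set z | e w z]) @: U) :|: ((fun x => [set x]) @: C).
  apply/subsetP=> D DF; have [hm [x]] := hF D DF; rewrite inE => /andP [xC xD].
  case: (boolP (D \subset [set x])) => [hsub|].
    have -> : D = [set x] by apply/eqP; rewrite eqEsubset hsub sub1set xD.
    by rewrite inE; apply/orP; right; apply: imset_f.
  case/subsetPn=> y yD; rewrite inE => yx.
  have xy : x != y by rewrite eq_sym.
  have [w Dw] := maxclique_nbr hm xD yD xy.
  rewrite inE; apply/orP; left; rewrite Dw; apply: imset_f.
  apply/bigcupP; exists x => //; rewrite inE hsym -(in_set (fun z => e w z)) -Dw //.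
have hU : #|U| <= \sum_(x in C) deg e x.
  rewrite /U /deg; apply: (big_ind2 (fun (A : {set T}) n => #|A| <= n)) => //.
  - by rewrite cards0.
  - move=> A1 n1 A2 n2 h1 h2; apply: leq_trans (leq_card_setU A1 A2).1 _.
    exact: leq_add.
apply: leq_trans (subset_leq_card sub) _.
apply: leq_trans (leq_card_setU _ _).1 _.
apply: leq_add; last exact: leq_imset_card.
exact: leq_trans (leq_imset_card _ _) hU.
Qed.

Definition pairs (A : {set T}) : {set T * T} :=
  setX A A :\: [set (x, x) | x in A].

Lemma card_pairs A : #|pairs A| = #|A| * #|A| - #|A|.
Proof.
rewrite /pairs cardsD cardsX; congr (_ - _).
rewrite (setIidPr _); last first.
  by apply/subsetP=> p /imsetP [x xA ->]; rewrite in_setX xA.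
by rewrite card_imset // => x y [].
Qed.

Lemma in_pairs A p : p \in pairs A -> [/\ p.1 \in A, p.2 \in A & p.1 != p.2].
Proof.
case: p => x y; rewrite /pairs in_setD in_setX /= => /andP [hn /andP [xA yA]].
split=> //; apply: contraNneq hn => E; subst y; exact: imset_f.
Qed.

Lemma countB (F : {set {set T}}) (C : {set T}) :
  (forall D, D \in F -> is_maximal_clique (sq_graph e) D) ->
  \sum_(D in F) (#|C :&: D| * #|C :&: D| - #|C :&: D|) <= #|C| * #|C|.
Proof.
move=> hF.
pose Q D := if D \in F then pairs (C :&: D) else set0.
have E1 : \sum_(D in F) (#|C :&: D| * #|C :&: D| - #|C :&: D|) = \sum_D #|Q D|.
  rewrite big_mkcond /=; apply: eq_bigr => D _; rewrite /Q.
  by case: ifP => _; rewrite ?card_pairs ?cards0.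
have disj : forall i j, i != j -> [disjoint Q i & Q j].
  move=> i j ij; rewrite /Q.
  case: ifP => iF; last by rewrite -setI_eq0 set0I.
  case: ifP => jF; last by rewrite -setI_eq0 setI0.
  rewrite -setI_eq0 -subset0; apply/subsetP => p; rewrite inE.
  case/andP => /in_pairs [h1 h2 h12] /in_pairs [h1' h2' _]; exfalso.
  move: h1 h2 h1' h2'; rewrite !inE => /andP [_ xi] /andP [_ yi] /andP [_ xj] /andP [_ yj].
  have hi := hF i iF; have hj := hF j jF.
  have [_ [w [xw wy]]] := sqP (cliqueP (proj1 (maximalP hi)) _ _ xi yi h12).
  have := maxclique_eq hi xi yi h12 xw wy.
  have := maxclique_eq hj xj yj h12 xw wy.
  by move=> Ej Ei; move: ij; rewrite Ei Ej eqxx.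
have E2 := partition_disjoint_bigcup addn (fun _ => 1) disj.
rewrite E1.
have -> : \sum_D #|Q D| = \sum_D \sum_(x in Q D) 1.
  by apply: eq_bigr => D _; rewrite sum1_card.
rewrite -E2 sum1_card -cardsX; apply: subset_leq_card.
apply/subsetP=> p /bigcupP [D _]; rewrite /Q; case: ifP => _; last by rewrite inE.
case/in_pairs; rewrite !inE => /andP [h1 _] /andP [h2 _] _.
by case: p h1 h2 => x y /= -> ->.
Qed.

End G.

From mathcomp Require Import ring lra.
Local Open Scope ring_scope.

Theorem lemmaA7 (R : realType) (c1 c2 : R) (hc1 : 0 < c1) (hc12 : c1 <= c2) :
  exists N : nat, forall a b : R, 0 < a -> 0 < b ->
  exists K : nat,
  forall (n : nat) (t : R) (T : finType) (e : rel T),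
    (N <= n)%N ->
    #|T| = n ->
    1 <= t -> t ^+ 10 <= n%:R ->
    simple_graph e ->
    (forall v : T, c1 * t <= (deg e v)%:R /\ (deg e v)%:R <= c2 * t) ->
    no_short_cycle e 8 ->
    forall C : {set T}, #|C|%:R <= a * t ->
    (#|[set D : {set T} | is_maximal_clique (sq_graph e) D
                          & (b * t <= #|C :&: D|%:R)%R]| <= K)%N.
Proof.
have hc2 : 0 < c2 by apply: lt_le_trans hc12.
exists 0%N => a b ha hb.
have hb2 : 0 < b ^+ 2 by rewrite exprn_gt0.
pose K1 := (Num.truncn (2 * a ^+ 2 / b ^+ 2)).+1.
pose K2 := (Num.truncn ((a * c2 + a * b) / b ^+ 2)).+1.
have hK1 : 2 * a ^+ 2 < K1%:R * b ^+ 2.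
  by rewrite -ltr_pdivrMr // truncnS_gt.
have hK2 : a * c2 + a * b < K2%:R * b ^+ 2.
  by rewrite -ltr_pdivrMr // truncnS_gt.
exists (maxn K1 K2) => n t T e _ _ ht1 _ [hsym hirr] hdeg hnc C hC.
set F := [set D : {set T} | _ & _].
have ht0 : 0 < t by apply: lt_le_trans ht1.
have hbt0 : 0 < b * t by rewrite mulr_gt0.
have hFm : forall D, D \in F -> is_maximal_clique (sq_graph e) D /\ b * t <= #|C :&: D|%:R.
  by move=> D; rewrite inE => /andP [].
have hCr : 0 <= (#|C|%:R : R) by [].
set X := (#|F|%:R : R).
have [hbt|hbt] := leP (b * t) 1.
-
  have hA := @countA T e hsym hirr hnc F C.
  have {hA} hA : (#|F| <= \sum_(x in C) deg e x + #|C|)%N.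
    apply: hA => D DF; have [hm hk] := hFm D DF; split=> //.
    have : (0 < #|C :&: D|)%N by rewrite -(ltr_nat R); apply: lt_le_trans hk.
    by rewrite card_gt0 => /set0Pn.
  have hXA : X <= #|C|%:R * (c2 * t) + #|C|%:R.
    rewrite /X; apply: le_trans (_ : (\sum_(x in C) deg e x + #|C|)%:R <= _).
      by rewrite ler_nat.
    rewrite natrD lerD2r natr_sum.
    apply: le_trans (_ : \sum_(x in C) (c2 * t) <= _).
      by apply: ler_sum => x _; case: (hdeg x).
    by rewrite sumr_const mulr_natl.
  have hX2 : X <= K2%:R.
    have h1 : X * b ^+ 2 <= (a * t) * (c2 * t) * b ^+ 2 + (a * t) * b ^+ 2.
      rewrite -mulrDl ler_pM2r //; apply: le_trans hXA _.
      by apply: lerD => //; rewrite ler_pM2r ?mulr_gt0.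
    have h2 : (a * t) * (c2 * t) * b ^+ 2 + (a * t) * b ^+ 2 <= a * c2 + a * b.
      have e1 : (a * t) * (c2 * t) * b ^+ 2 = (a * c2) * (b * t) ^+ 2 by ring.
      have e2 : (a * t) * b ^+ 2 = (a * b) * (b * t) by ring.
      rewrite e1 e2; apply: lerD.
        rewrite ger_pMr ?mulr_gt0 //; rewrite expr_le1 //; exact: ltW.
      by rewrite ger_pMr ?mulr_gt0.
    rewrite -(ler_pM2r hb2); apply: le_trans h1 _; apply: le_trans h2 _.
    exact: ltW.
  apply: leq_trans (leq_maxr K1 K2); by rewrite -(ler_nat R).
-
  have hB := @countB T e hsym hirr hnc F C (fun D DF => (hFm D DF).1).
  have hk : forall D, D \in F ->
      (b * t) ^+ 2 <= 2 * (#|C :&: D| * #|C :&: D| - #|C :&: D|)%:R.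
    move=> D DF; have [_ hkD] := hFm D DF.
    set k := #|C :&: D| in hkD *.
    have k2 : (1 < k)%N by rewrite -(ltr_nat R); apply: lt_le_trans hkD.
    have kr : (2 : R) <= k%:R by rewrite (ler_nat R 2 k).
    rewrite natrB; last by rewrite leq_pmull // ltnW.
    rewrite natrM.
    have hk0 : 0 <= b * t by exact: ltW.
    have : (b * t) ^+ 2 <= k%:R ^+ 2 by rewrite ler_pXn2r // ?nnegrE ?ler0n.
    nra.
  have hsum : X * (b * t) ^+ 2 <= 2 * (#|C| * #|C|)%:R.
    apply: le_trans (_ : \sum_(D in F) 2 * (#|C :&: D| * #|C :&: D| - #|C :&: D|)%:R <= _).
      by rewrite /X mulr_natl -sumr_const; apply: ler_sum.
    rewrite -mulr_sumr -natr_sum ler_pM2l // ler_nat; exact: hB.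
  have hX1 : X < K1%:R.
    rewrite -(ltr_pM2r hb2).
    apply: le_lt_trans hK1.
    have ht2 : 0 < t ^+ 2 by rewrite exprn_gt0.
    rewrite -(ler_pM2r ht2).
    have e1 : X * b ^+ 2 * t ^+ 2 = X * (b * t) ^+ 2 by ring.
    rewrite e1; apply: le_trans hsum _.
    rewrite natrM.
    have : (#|C|%:R : R) * #|C|%:R <= (a * t) * (a * t).
      by apply: ler_pM.
    nra.
  apply: leq_trans (leq_maxl K1 K2); rewrite -(ler_nat R); exact: ltW.
Qed.
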